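(* Let $\mathcal{T}$ be a teacher class and let $H\subseteq\mathcal{X}\times\mathcal{Y}$ be a non-empty history consistent with $\mathcal{T}$. For every deterministic DFF algorithm $\mathcal{A}$, $M(\mathcal{A},\mathcal{T},H)\geq\mathrm{DFFdim}(\mathcal{T},H)$.
   Context: Setting. $\mathcal{X}$ is a set of examples, $\mathcal{Y}$ a finite set of labels, and $\Phi$ a set of Boolean features $\phi:\mathcal{X}\to\{0,1\}$; $\bot$ denotes a null symbol not in $\mathcal{X}\cup\mathcal{Y}\cup\Phi$. A teacher over $\mathcal{X},\mathcal{Y},\Phi$ is a pair $T=(\ell,\psi)$ with $\ell:\mathcal{X}\to\mathcal{Y}$ and $\psi:\mathcal{X}\times\mathcal{X}\to\Phi\cup\{\bot\}$ such that whenever $\ell(x)\neq\ell(\hat x)$, $\phi:=\psi(x,\hat x)\in\Phi$, $\phi(x)=1$ and $\phi(\hat x)=0$. A teacher class is a set of teachers. A history is a non-empty set $H\subseteq\mathcal{X}\times\mathcal{Y}$; a teacher $(\ell,\psi)$ is consistent with $H$ if $\ell(x)=y$ for all $(x,y)\in H$; $\mathcal{T}_H$ is the set of teachers in $\mathcal{T}$ consistent with $H$, and $\mathcal{T}$ is consistent with $H$ if $\mathcal{T}_H\neq\emptyset$. DFF protocol. A DFF algorithm is given $H$ in advance. In each round $t=1,2,\dots$: an example $x_t\in\mathcal{X}$ arrives; the algorithm outputs a predicted label $\hat y_t$ and an explanation $\hat x_t$, where $(\hat x_t,\hat y_t)$ must belong to $H\cup\{(x_s,y_s):s<t\}$; if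 $\hat y_t=y_t$ (the true label of $x_t$) the algorithm learns only that it was correct; otherwise (a mistake) it receives $y_t$ and a feature $\phi_t\in\Phi$. The feedback of round $t$ is consistent with a teacher $(\ell,\psi)$ if $y_t=\ell(x_t)$ and, when $\hat y_t\neq y_t$, $\phi_t=\psi(x_t,\hat x_t)$. $M(\mathcal{A},\mathcal{T},H)$ denotes the supremum, over all finite example sequences and all teachers $T\in\mathcal{T}_H$, of the number of mistakes of $\mathcal{A}$ when all feedback is consistent with $T$. DFF dimension. A DFF tree is a rooted tree whose nodes are triples $\langle y,\phi,x\rangle$ with $y\in\mathcal{Y}\cup\{\bot\}$, $\phi\in\Phi\cup\{\bot\}$, $x\in\mathcal{X}\cup\{\bot\}$, such that the root has $y=\phi=\bot$, a node has $x=\bot$ iff it is a leaf, every edge is labeled by a pair $(\hat x,\hat y)\in\mathcal{X}\times\mathcal{Y}$, and every non-root node $\langle y,\phi,x\rangle$ with incoming edge $(\hat x,\hat y)$ has $\phi\neq\bot$ whenever $y\neq\hat y$. For a parent–child pair $\langle\cdot,\cdot,x\rangle\xrightarrow{(\hat x,\hat y)}\langle y,\phi,\cdot\rangle$ on a path, $(x,y)$ is called a labeled example in that path. A path from the root is consistent with a teacher $(\ell,\psi)$ if for every such parent–child pair on it, $\ell(x)=y$ and, if $y\neq\hat y$, $\psi(x,\hat x)=\phi$. Given $\mathcal{T}$ consistent with $H$, a DFF tree is shattered by $\mathcal{T}$ and $H$ if: (1) every non-root node $\langle y,\phi,x\rangle$ with incoming edge $(\hat x,\hat y)$ has $y\neq\hat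 y$; (2) the labels of the outgoing edges of each non-leaf node $v$ are exactly the pairs that belong to $H$ or are labeled examples in the path from the root to $v$; (3) every root-to-leaf path is consistent with some teacher in $\mathcal{T}_H$; (4) all root-to-leaf paths have the same number of edges, called the height. $\mathrm{DFFdim}(\mathcal{T},H)$ is the maximal height of a DFF tree shattered by $\mathcal{T}$ and $H$. *)

(* Defs.v *)
From Stdlib Require List.
From mathcomp Require Import all_boot.

Set Implicit Arguments.
Unset Strict Implicit.
Unset Printing Implicit Defensive.

Section DFF.
Variables (X : Type) (Y : finType).

(** Boolean features are functions X -> bool; the feature set Phi is a
    predicate on them.  The null symbol ⊥ is modelled by [None]. *)
Definition feature := X -> bool.

Record teacher := Teacher {
  lab : X -> Y;
  psi : X -> X -> option feature
}.

Definition is_teacher (Phi : feature -> Prop) (T : teacher) : Prop :=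
  forall x xh, lab T x <> lab T xh ->
    exists phi, psi T x xh = Some phi /\ Phi phi /\ phi x = true /\ phi xh = false.

Definition history := X * Y -> Prop.

Definition consistent_with (T : teacher) (H : history) : Prop :=
  forall x y, H (x, y) -> lab T x = y.

(** What a deterministic algorithm has seen in a past round: the example,
    its true label (equal to the prediction when correct, given as feedback
    otherwise), and the feature received (None when the prediction was
    correct). *)
Definition transcript := seq (X * Y * option feature).

(** A deterministic DFF algorithm: maps the transcript of past rounds and
    the current example to an explanation/prediction pair (xh, yh). *)
Definition algorithm := transcript -> X -> X * Y.

Definition valid_algorithm (H : history) (A : algorithm) : Prop :=
  forall tr x, H (A tr x) \/
    exists f, List.In ((A tr x).1, (A tr x).2, f) tr.

Fixpoint mistakes_from (A : algorithm) (T : teacher) (tr : transcript)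
    (xs : seq X) : nat :=
  match xs with
  | [::] => 0
  | x :: xs' =>
      let xh := (A tr x).1 in
      let yh := (A tr x).2 in
      let y := lab T x in
      if yh == y then mistakes_from A T (rcons tr (x, y, None)) xs'
      else (mistakes_from A T (rcons tr (x, y, psi T x xh)) xs').+1
  end.

Definition mistakes (A : algorithm) (T : teacher) (xs : seq X) : nat :=
  mistakes_from A T [::] xs.

(** A node is a triple <y, phi, x> with each component possibly
    ⊥ (None); a node is a leaf iff x = None.  The children of a node are
    indexed by edge labels (xh, yh) in X * Y; only the labels allowed by the
    shattering condition (2) are actual edges, the others are ignored. *)
Inductive dfftree :=
  DNode : option Y -> option feature -> option X -> (X * Y -> dfftree) -> dfftree.

Definition node_y (t : dfftree) := let: DNode y _ _ _ := t in y.
Definition node_phi (t : dfftree) := let: DNode _ f _ _ := t in f.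

(** A step of a path: parent example x, edge label (xh, yh),
    child's y and phi. *)
Definition step := (X * (X * Y) * option Y * option feature)%type.

Definition step_x (s : step) : X := s.1.1.1.
Definition step_edge (s : step) : X * Y := s.1.1.2.
Definition step_y (s : step) : option Y := s.1.2.
Definition step_phi (s : step) : option feature := s.2.

Definition step_example (s : step) : seq (X * Y) :=
  match step_y s with Some y => [:: (step_x s, y)] | None => [::] end.

(** [rtl_path H Ex t p]: p is a root-to-leaf path of t, where the outgoing
    edges of each internal node are exactly the pairs in H or among the
    labelled examples Ex accumulated along the path from the root
    (condition (2) of shattering). *)
Fixpoint rtl_path (H : history) (Ex : seq (X * Y)) (t : dfftree)
    (p : seq step) {struct t} : Prop :=
  match t, p with
  | DNode _ _ None _, [::] => True
  | DNode _ _ (Some x) ch, s :: p' =>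
      step_x s = x /\ (H (step_edge s) \/ List.In (step_edge s) Ex) /\
      node_y (ch (step_edge s)) = step_y s /\
      node_phi (ch (step_edge s)) = step_phi s /\
      rtl_path H (Ex ++ step_example s) (ch (step_edge s)) p'
  | _, _ => False
  end.

Definition step_wf (Phi : feature -> Prop) (s : step) : Prop :=
  (forall f, step_phi s = Some f -> Phi f) /\
  (step_y s <> Some (step_edge s).2 -> step_phi s <> None).

Definition path_consistent (T : teacher) (p : seq step) : Prop :=
  forall s, List.In s p ->
    step_y s = Some (lab T (step_x s)) /\
    (step_y s <> Some (step_edge s).2 -> step_phi s = psi T (step_x s) (step_edge s).1).

Definition shattered (Phi : feature -> Prop) (TC : teacher -> Prop)
    (H : history) (t : dfftree) (d : nat) : Prop :=
  node_y t = None /\ node_phi t = None /\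
  forall p, rtl_path H [::] t p ->
    (forall s, List.In s p -> step_wf Phi s) /\
    (forall s, List.In s p -> step_y s <> Some (step_edge s).2) /\
    (exists T, TC T /\ consistent_with T H /\ path_consistent T p) /\
    size p = d.

End DFF.

(* Main.v *)
Require Import Defs.
From mathcomp Require Import all_boot.

Section Adv.
Variables (X : Type) (Y : finType) (A : algorithm X Y).

Fixpoint adv (t : dfftree X Y) (tr : transcript X Y) : seq (step X Y) :=
  match t with
  | DNode _ _ None _ => [::]
  | DNode _ _ (Some x) ch =>
      let e := A tr x in
      let c := ch e in
      (x, e, node_y c, node_phi c)
        :: adv c (rcons tr (x, odflt e.2 (node_y c), node_phi c))
  end.

Lemma adv_rtl (H : history X Y) (HA : valid_algorithm H A) t :
  forall tr Ex, (forall x y f, List.In (x, y, f) tr -> List.In (x, y) Ex) ->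
  exists p, rtl_path H Ex t p /\
    (p = adv t tr \/ exists s, List.In s p /\ step_y s = None).
Proof.
elim: t => y0 f0 [x|] ch IH tr Ex Hinv /=; last by exists [::]; split => //; left.
set e := A tr x.
have He : H e \/ List.In e Ex.
  case: (HA tr x) => [h|[f hf]]; [by left|right].
  by move/Hinv: hf; rewrite -surjective_pairing.
case Hy: (node_y (ch e)) => [y|].
- have Hinv' : forall x' y' f', List.In (x', y', f')
      (rcons tr (x, odflt e.2 (node_y (ch e)), node_phi (ch e))) ->
      List.In (x', y') (Ex ++ [:: (x, y)]).
    move=> x' y' f'; rewrite -cats1 Hy /= => H0; case: (List.in_app_or _ _ _ H0) => [/Hinv h|[h|[]]].
      by apply: List.in_or_app; left.
    by case: h => -> -> _; apply: List.in_or_app; right; left.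
  have [p' [Hp' Hor]] := IH e _ _ Hinv'.
  exists ((x, e, Some y, node_phi (ch e)) :: p'); split.
    by rewrite /= /step_example /step_y /= Hy.
  case: Hor => [->|[s [Hs Hsy]]]; first by left; rewrite Hy.
  by right; exists s; split => //; right.
- have [p' [Hp' _]] := IH e tr Ex Hinv.
  exists ((x, e, None, node_phi (ch e)) :: p'); split.
    by rewrite /= /step_example /step_y /= Hy cats0.
  by right; exists (x, e, None, node_phi (ch e)); split => //; left.
Qed.

Lemma adv_mistakes (T : teacher X Y) t :
  forall tr, (forall s, List.In s (adv t tr) ->
     step_y s = Some (lab T (step_x s)) /\ step_y s <> Some (step_edge s).2 /\
     step_phi s = psi T (step_x s) (step_edge s).1) ->
  mistakes_from A T tr (map (@step_x X Y) (adv t tr)) = size (adv t tr).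
Proof.
elim: t => y0 f0 [x|] ch IH tr Hs //=.
have [h1 [h2 h3]] := Hs _ (or_introl erefl).
rewrite /step_y /step_x /step_edge /step_phi /= in h1 h2 h3.
have -> : ((A tr x).2 == lab T x) = false.
  by apply/eqP => E; apply: h2; rewrite h1 E.
rewrite h1 /= -h3.
change (step_x (x, A tr x, Some (lab T x), node_phi (ch (A tr x)))) with x.
by rewrite IH // => s hs; apply: Hs; rewrite /= h1; right.
Qed.

End Adv.

Theorem mainTheorem2 (X : Type) (Y : finType) (Phi : feature X -> Prop)
    (TC : teacher X Y -> Prop)
    (HTC : forall T, TC T -> is_teacher Phi T)
    (H : history X Y)
    (Hne : exists p, H p)
    (Hcons : exists T, TC T /\ consistent_with T H)
    (A : algorithm X Y) (HA : valid_algorithm H A) (d : nat) :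
  (exists t : dfftree X Y, shattered Phi TC H t d) ->
  exists (xs : seq X) (T : teacher X Y),
    TC T /\ consistent_with T H /\ d <= mistakes A T xs.
Proof.
move=> [t [_ [_ Hsh]]].
have [p [Hp Hor]] := @adv_rtl X Y A H HA t [::] [::] (fun _ _ _ h => h).
have [_ [Hneq [[T [HT [HcT HpT]]] Hsz]]] := Hsh p Hp.
case: Hor => [Ep|[s [Hs Hsy]]]; last first.
  by have [h _] := HpT s Hs; rewrite Hsy in h.
exists (map (@step_x X Y) p), T; split => //; split => //.
rewrite /mistakes Ep adv_mistakes -?Ep ?Hsz //.
move=> s Hs; have [h1 h2] := HpT s Hs; have h3 := Hneq s Hs.
by split => //; split => //; apply: h2.
Qed.
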